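(* Let $G$ be a finite group and $H$ a normal subgroup of $G$. Then the extended subgroup sum graph $\Gamma^+_{G,H}$ admits a total perfect code if and only if $|G|$ is even and $|H|=2$.
   Context: For a normal subgroup $H$ of a finite group $G$, the extended subgroup sum graph $\Gamma^+_{G,H}$ is the simple undirected graph with vertex set $G$ in which distinct vertices $x,y$ are adjacent if and only if $xy\in H$. A total perfect code in a graph is a set $C$ of vertices such that every vertex of the graph (whether in $C$ or not) has exactly one neighbour in $C$. *)

(* Defs.v *)
From mathcomp Require Import all_boot all_fingroup.
Set Implicit Arguments.
Unset Strict Implicit.
Unset Printing Implicit Defensive.
Local Open Scope group_scope.

Definition ext_sum_adj (gT : finGroupType) (H : {set gT}) (x y : gT) : bool :=
  (x != y) && (x * y \in H).

Definition total_perfect_code (gT : finGroupType) (G : {set gT})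
    (adj : gT -> gT -> bool) (C : {set gT}) : Prop :=
  C \subset G /\ forall v, v \in G -> #|[set c in C | adj v c]| = 1%N.

Definition has_total_perfect_code_ext_sum (gT : finGroupType) (G H : {set gT}) : Prop :=
  exists C : {set gT}, total_perfect_code G (ext_sum_adj H) C.

(* Main.v *)
Require Import Defs.
From mathcomp Require Import all_boot all_fingroup.
Set Implicit Arguments.
Unset Strict Implicit.
Unset Printing Implicit Defensive.
Local Open Scope group_scope.

Lemma sq_transfer (gT : finGroupType) (G H : {group gT}) (v c : gT) :
  H <| G -> v \in G -> v * c \in H -> (c * c \in H) = (v * v \in H).
Proof.
move=> nHG vG vcH.
have NH : v \in 'N(H) by apply: (subsetP (normal_norm nHG)).
have cvH : c * v \in H.
  by have := vcH; rewrite -(memJ_norm _ NH) /conjg !mulgA mulVg mul1g.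
have e1 : c * c = (c * v^-1) * (v * c) by rewrite !mulgA mulgKV.
have e2 : c * v^-1 = (c * v) * (v^-1 * v^-1) by rewrite !mulgA mulgK.
rewrite e1 (groupMr _ vcH) e2 (groupMl _ cvH) -invMg groupV.
done.
Qed.

Theorem theorem6p3 (gT : finGroupType) (G H : {group gT}) :
  (H <| G)%g ->
  (has_total_perfect_code_ext_sum G H <-> (~~ odd #|G| /\ #|H| = 2%N)).
Proof.
move=> nHG; have sHG := normal_sub nHG.
split.
- case=> C [sCG tC].
  set S := C :&: H.
  have hS : forall v, v \in H -> #|S :\ v| = 1%N.
    move=> v vH; rewrite -(tC v (subsetP sHG v vH)).
    suff -> : [set c in C | ext_sum_adj H v c] = S :\ v by [].
    apply/setP => c; rewrite !inE /ext_sum_adj (groupMl _ vH).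
    by rewrite eq_sym; case: (c \in C); case: (c \in H); case: (c == v).
  have := hS 1 (group1 H).
  move=> /eqP/cards1P [s Hs].
  have s1 : s \in S :\ 1 by rewrite Hs set11.
  have sS : s \in S by case/setD1P: s1.
  have sH : s \in H by move: sS; rewrite inE => /andP [].
  have cS : #|S| = 2%N by rewrite (cardsD1 s S) sS (hS s sH).
  have SH : S = H.
    have inS : forall x, x \in H -> x \in S.
      move=> x xH; have := cardsD1 x S; rewrite cS (hS x xH).
      by case: (x \in S).
    apply/setP=> x; apply/idP/idP; first by rewrite /S inE => /andP [].
    exact: inS.
  split; last by rewrite -SH.
  by rewrite -dvdn2 -cS SH; apply: cardSg.
- case=> _ H2.
  exists [set x in G | (x * x \in H) || (x == repr (x *: H))].
  split; first by apply/subsetP=> x; rewrite inE => /andP [].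
  move=> v vG.
  set K := v^-1 *: H.
  have memK : forall c, (v * c \in H) = (c \in K).
    by move=> c; rewrite /K mem_lcoset invgK.
  have KG : forall c, c \in K -> c \in G.
    by move=> c; rewrite -memK => /(subsetP sHG); rewrite (groupMl _ vG).
  have Ksq : forall c, c \in K -> (c * c \in H) = (v * v \in H).
    by move=> c; rewrite -memK; exact: sq_transfer nHG vG.
  case: (boolP (v * v \in H)) => vvH.
  + have vK : v \in K by rewrite -memK.
    have -> : [set c in [set x in G | (x * x \in H) || (x == repr (x *: H))]
                | ext_sum_adj H v c] = K :\ v.
      apply/setP=> c; rewrite !inE /ext_sum_adj memK.
      case cK: (c \in K); rewrite ?andbF ?andbT //.
      by rewrite (KG _ cK) (Ksq _ cK) vvH /= eq_sym.
    by have := cardsD1 v K; rewrite vK card_lcoset H2 => -[].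
  + have rK : repr K \in K by apply: (@mem_repr _ _ v^-1); rewrite /K lcoset_refl.
    have cK_eq : forall c, c \in K -> c *: H = K.
      by move=> c cK; apply/lcoset_eqP.
    have -> : [set c in [set x in G | (x * x \in H) || (x == repr (x *: H))]
                | ext_sum_adj H v c] = [set repr K].
      apply/setP=> c; rewrite !inE /ext_sum_adj memK.
      apply/idP/idP.
      * case/andP=> /andP [_ /orP [ccH | /eqP ceq]] /andP [_ cK].
        - by move: ccH; rewrite (Ksq _ cK) (negbTE vvH).
        - by rewrite ceq (cK_eq _ cK).
      * move/eqP=> ->; rewrite (KG _ rK) (Ksq _ rK) (negbTE vvH) (cK_eq _ rK) eqxx rK.
        rewrite andbT /=; apply/eqP=> ev; move: vvH; rewrite memK ev rK.
        done.
    by rewrite cards1.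
Qed.
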